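(* Let $(S,g_1^0,g_2^0,g_3^0,D_1,D_2,D_3,\xi)\in\mathrm{MC}_{\mathrm{pre}}$. Then for all $A,B\in C^\infty(S,\mathbb{R})$ with $A,B>0$ and all $\sigma\in\{-1,+1\}$, $$\big(S,\,Ag_1^0,\,Ag_2^0,\,Ag_3^0,\,\sigma AB^{g_2^0+g_3^0}D_1,\,\sigma AB^{g_3^0+g_1^0}D_2,\,\sigma AB^{g_1^0+g_2^0}D_3,\,\xi+\log A+(g_1^0+g_2^0+g_3^0)\log B\big)\in\mathrm{MC}_{\mathrm{pre}}.$$
   Context: ''Cyclic $(i,j,k)$'' means $(i,j,k)\in\{(1,2,3),(2,3,1),(3,1,2)\}$. Let $S$ be a smooth manifold diffeomorphic to $\mathbb{R}^3$ and $D_1,D_2,D_3$ a frame of vector fields on $S$; its structure functions $c_{jk}^i\in C^\infty(S,\mathbb{R})$ are defined by $[D_j,D_k]=\sum_{i=1}^3c_{jk}^iD_i$ (so $c_{jk}^i=-c_{kj}^i$). $\mathrm{MC}_{\mathrm{pre}}$ is the set of tuples $(S,g_1^0,g_2^0,g_3^0,D_1,D_2,D_3,\xi)$ with $g_i^0,\xi\in C^\infty(S,\mathbb{R})$ satisfying (E1) $0=g_2^0g_3^0+g_3^0g_1^0+g_1^0g_2^0$, and (E2) $0=D_i(g_j^0+g_k^0)+c_{ij}^j(g_i^0-g_j^0)+c_{ik}^k(g_i^0-g_k^0)-2D_i(\xi)g_i^0$ for all cyclic $(i,j,k)$. Here $B^{f}$ means $e^{f\log B}$. *)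

(* Defs.v *)
(* classical reals. S is modelled as R^3 itself. *)
From Stdlib Require Import Reals Lra List ClassicalEpsilon.
Open Scope R_scope.

Inductive idx : Type := I1 | I2 | I3.

Definition idx_eqb (a b : idx) : bool :=
  match a, b with
  | I1, I1 | I2, I2 | I3, I3 => true
  | _, _ => false
  end.

(* cyclic successor: (i, nxt i, nxt (nxt i)) runs over the cyclic triples *)
Definition nxt (i : idx) : idx :=
  match i with I1 => I2 | I2 => I3 | I3 => I1 end.

Definition sum3 (F : idx -> R) : R := F I1 + F I2 + F I3.

Definition point := idx -> R.

Definition upd (x : point) (m : idx) (t : R) : point :=
  fun k => if idx_eqb k m then t else x k.

(* partial derivative in coordinate m (chosen by epsilon; meaningful when it exists) *)
Definition pd (m : idx) (f : point -> R) (x : point) : R :=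
  epsilon (inhabits 0)
    (fun l => derivable_pt_lim (fun t => f (upd x m t)) (x m) l).

Fixpoint iter_pd (l : list idx) (f : point -> R) : point -> R :=
  match l with
  | nil => f
  | m :: l' => pd m (iter_pd l' f)
  end.

Definition cont3 (f : point -> R) : Prop :=
  forall x eps, 0 < eps -> exists delta, 0 < delta /\
    forall y, (forall m, Rabs (y m - x m) < delta) -> Rabs (f y - f x) < eps.

Definition smooth (f : point -> R) : Prop :=
  forall l : list idx, cont3 (iter_pd l f) /\
    forall m x, derivable_pt_lim (fun t => iter_pd l f (upd x m t)) (x m)
                                 (iter_pd (m :: l) f x).

(* vector field = its coefficient functions in the coordinate frame of R^3 *)
Definition VF := idx -> point -> R.

Definition smooth_vf (V : VF) : Prop := forall m, smooth (V m).

Definition vf_app (V : VF) (f : point -> R) : point -> R :=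
  fun x => sum3 (fun m => V m x * pd m f x).

Definition bracket (V W : VF) : VF :=
  fun m x => vf_app V (W m) x - vf_app W (V m) x.

Definition scale (h : point -> R) (V : VF) : VF := fun m x => h x * V m x.

Definition det3 (M : idx -> idx -> R) : R :=
  M I1 I1 * (M I2 I2 * M I3 I3 - M I2 I3 * M I3 I2)
  - M I1 I2 * (M I2 I1 * M I3 I3 - M I2 I3 * M I3 I1)
  + M I1 I3 * (M I2 I1 * M I3 I2 - M I2 I2 * M I3 I1).

Definition is_frame (D : idx -> VF) : Prop :=
  (forall i, smooth_vf (D i)) /\ forall x, det3 (fun i m => D i m x) <> 0.

(* c j k i = c_{jk}^i :  [D_j, D_k] = sum_i c_{jk}^i D_i *)
Definition is_structure (D : idx -> VF) (c : idx -> idx -> idx -> point -> R) : Prop :=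
  forall j k m x, bracket (D j) (D k) m x = sum3 (fun i => c j k i x * D i m x).

Definition Bpow (B f : point -> R) : point -> R := fun x => exp (f x * ln (B x)).

Definition MC_pre (g : idx -> point -> R) (D : idx -> VF) (xi : point -> R) : Prop :=
  (forall i, smooth (g i)) /\ smooth xi /\ is_frame D /\
  (forall x, 0 = g I2 x * g I3 x + g I3 x * g I1 x + g I1 x * g I2 x) /\
  exists c, is_structure D c /\
    forall i x,
      let j := nxt i in let k := nxt (nxt i) in
      0 = vf_app (D i) (fun y => g j y + g k y) x
          + c i j j x * (g i x - g j x) + c i k k x * (g i x - g k x)
          - 2 * vf_app (D i) xi x * g i x.

(* Main.v *)
Require Import Defs.
From Stdlib Require Import Reals Lra List ClassicalEpsilon FunctionalExtensionality.
Open Scope R_scope.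

Lemma upd_same (x : point) m : upd x m (x m) = x.
Proof. apply functional_extensionality; intro k; unfold upd; destruct k, m; reflexivity. Qed.

Lemma pd_eq m f x l :
  derivable_pt_lim (fun t => f (upd x m t)) (x m) l -> pd m f x = l.
Proof.
  intro Hl. unfold pd.
  pose proof (epsilon_spec (inhabits 0)
    (fun l => derivable_pt_lim (fun t => f (upd x m t)) (x m) l) (ex_intro _ l Hl)) as Hs.
  cbv beta in Hs. eapply uniqueness_limite; eauto.
Qed.

Definition pdiff (f : point -> R) : Prop :=
  forall m x, derivable_pt_lim (fun t => f (upd x m t)) (x m) (pd m f x).

Lemma dl_const m x c : derivable_pt_lim (fun t => (fun _ : point => c) (upd x m t)) (x m) 0.
Proof. apply (derivable_pt_lim_const c). Qed.

Lemma pd_const m c x : pd m (fun _ => c) x = 0.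
Proof. apply pd_eq. apply (derivable_pt_lim_const c). Qed.

Lemma dl_add m x f g : pdiff f -> pdiff g ->
  derivable_pt_lim (fun t => f (upd x m t) + g (upd x m t)) (x m) (pd m f x + pd m g x).
Proof. intros Hf Hg. apply (derivable_pt_lim_plus (fun t => f (upd x m t)) (fun t => g (upd x m t))); auto. Qed.

Lemma pd_add m x f g : pdiff f -> pdiff g ->
  pd m (fun y => f y + g y) x = pd m f x + pd m g x.
Proof. intros; apply pd_eq; apply dl_add; auto. Qed.

Lemma dl_mul m x f g : pdiff f -> pdiff g ->
  derivable_pt_lim (fun t => f (upd x m t) * g (upd x m t)) (x m) (pd m f x * g x + f x * pd m g x).
Proof.
  intros Hf Hg.
  pose proof (derivable_pt_lim_mult (fun t => f (upd x m t)) (fun t => g (upd x m t)) _ _ _ (Hf m x) (Hg m x)) as Hm.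
  cbv beta in Hm. rewrite upd_same in Hm. exact Hm.
Qed.

Lemma pd_mul m x f g : pdiff f -> pdiff g ->
  pd m (fun y => f y * g y) x = pd m f x * g x + f x * pd m g x.
Proof. intros; apply pd_eq; apply dl_mul; auto. Qed.

Lemma dl_exp m x f : pdiff f ->
  derivable_pt_lim (fun t => exp (f (upd x m t))) (x m) (exp (f x) * pd m f x).
Proof.
  intros Hf.
  pose proof (derivable_pt_lim_comp (fun t => f (upd x m t)) exp _ _ _ (Hf m x)
    (derivable_pt_lim_exp (f (upd x m (x m))))) as Hm.
  rewrite upd_same in Hm. exact Hm.
Qed.

Lemma pd_exp m x f : pdiff f -> pd m (fun y => exp (f y)) x = exp (f x) * pd m f x.
Proof. intros; apply pd_eq; apply dl_exp; auto. Qed.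

Lemma dl_ln m x f : pdiff f -> 0 < f x ->
  derivable_pt_lim (fun t => ln (f (upd x m t))) (x m) (/ f x * pd m f x).
Proof.
  intros Hf Hp.
  assert (Hp' : 0 < f (upd x m (x m))) by (rewrite upd_same; exact Hp).
  pose proof (derivable_pt_lim_comp (fun t => f (upd x m t)) ln _ _ _ (Hf m x)
    (derivable_pt_lim_ln _ Hp')) as Hm.
  rewrite upd_same in Hm. exact Hm.
Qed.

Lemma pd_ln m x f : pdiff f -> 0 < f x -> pd m (fun y => ln (f y)) x = / f x * pd m f x.
Proof. intros; apply pd_eq; apply dl_ln; auto. Qed.

Lemma cont3_const c : cont3 (fun _ => c).
Proof. intros x eps He. exists 1. split. lra. intros. rewrite Rminus_diag, Rabs_R0. exact He. Qed.

Lemma cont3_add f g : cont3 f -> cont3 g -> cont3 (fun y => f y + g y).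
Proof.
  intros Hf Hg x eps He.
  destruct (Hf x (eps/2)) as [d1 [Hd1 H1]]; [lra|].
  destruct (Hg x (eps/2)) as [d2 [Hd2 H2]]; [lra|].
  exists (Rmin d1 d2). split. apply Rmin_pos; auto.
  intros y Hy.
  assert (A1 := H1 y (fun m => Rlt_le_trans _ _ _ (Hy m) (Rmin_l _ _))).
  assert (A2 := H2 y (fun m => Rlt_le_trans _ _ _ (Hy m) (Rmin_r _ _))).
  replace (f y + g y - (f x + g x)) with ((f y - f x) + (g y - g x)) by ring.
  eapply Rle_lt_trans. apply Rabs_triang. lra.
Qed.

Lemma cont3_comp (phi : R -> R) f : cont3 f -> (forall x, continuity_pt phi (f x)) ->
  cont3 (fun y => phi (f y)).
Proof.
  intros Hf Hp x eps He.
  specialize (Hp x). unfold continuity_pt, continue_in, limit1_in, limit_in in Hp.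
  destruct (Hp eps He) as [alp [Ha Hl]].
  destruct (Hf x alp Ha) as [d [Hd Hy]].
  exists d. split; auto. intros y Hy'.
  destruct (Req_dec (f y) (f x)) as [E|E].
  - rewrite E, Rminus_diag, Rabs_R0. exact He.
  - apply (Hl (f y)). split. split; [exact I | auto]. apply Hy. exact Hy'.
Qed.

Lemma cont_lim phi y l : derivable_pt_lim phi y l -> continuity_pt phi y.
Proof. intro H. apply derivable_continuous_pt. exact (exist _ l H). Qed.

Lemma cont3_mul f g : cont3 f -> cont3 g -> cont3 (fun y => f y * g y).
Proof.
  intros Hf Hg.
  assert (Hsq : forall h, cont3 h -> cont3 (fun y => h y * h y)).
  { intros h Hh. apply (cont3_comp (fun z => z * z)); auto. intro x.
    apply (cont_lim _ _ _ (derivable_pt_lim_mult id id (h x) 1 1 (derivable_pt_lim_id _) (derivable_pt_lim_id _))). }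
  assert (Hsc : forall c h, cont3 h -> cont3 (fun y => c * h y)).
  { intros c h Hh. apply (cont3_comp (fun z => c * z)); auto. intro x.
    apply (cont_lim _ _ _ (derivable_pt_lim_mult (fct_cte c) id (h x) 0 1 (derivable_pt_lim_const _ _) (derivable_pt_lim_id _))). }
  assert (E : (fun y => f y * g y) = (fun y => /4 * ((f y + g y) * (f y + g y)) + (-/4) * ((f y + (-1) * g y) * (f y + (-1) * g y)))).
  { apply functional_extensionality; intro y; field. }
  rewrite E. apply cont3_add; apply Hsc; apply Hsq; apply cont3_add; auto.
Qed.

Inductive T : (point -> R) -> Prop :=
| Tsm f : smooth f -> T f
| Tconst c : T (fun _ => c)
| Tadd f g : T f -> T g -> T (fun x => f x + g x)
| Tmul f g : T f -> T g -> T (fun x => f x * g x)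
| Texp f : T f -> T (fun x => exp (f x))
| Tln f : T f -> (forall x, 0 < f x) -> T (fun x => ln (f x)).

Lemma iter_pd_app l m f : iter_pd l (pd m f) = iter_pd (l ++ m :: nil) f.
Proof. induction l; simpl; [reflexivity| rewrite IHl; reflexivity]. Qed.

Lemma smooth_pd f m : smooth f -> smooth (pd m f).
Proof. intros Hf l. destruct (Hf (l ++ m :: nil)) as [C P]. rewrite iter_pd_app. split; auto.
  intros m0 x. simpl. rewrite iter_pd_app. apply P. Qed.

Lemma pd_fun m f G : (forall x, derivable_pt_lim (fun t => f (upd x m t)) (x m) (G x)) ->
  pd m f = G.
Proof. intro H. apply functional_extensionality; intro x. apply pd_eq. auto. Qed.

Lemma T_closed f : T f -> cont3 f /\ pdiff f /\ forall m, T (pd m f).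
Proof.
  induction 1 as [f Hf | c | f g Tf [Cf [Pf Df]] Tg [Cg [Pg Dg]]
                 | f g Tf [Cf [Pf Df]] Tg [Cg [Pg Dg]] | f Tf [Cf [Pf Df]] | f Tf [Cf [Pf Df]] Hpos].
  - destruct (Hf nil) as [C P]. split; [exact C|]. split; [exact P|].
    intro m. apply Tsm. apply smooth_pd; auto.
  - assert (P : pdiff (fun _ => c)).
    { intros m x. rewrite pd_const. apply (derivable_pt_lim_const c). }
    split; [apply cont3_const|]. split; [exact P|].
    intro m. rewrite (pd_fun m _ (fun _ => 0)). apply Tconst.
    intro x. apply (derivable_pt_lim_const c).
  - split; [apply cont3_add; auto|].
    split. intros m x. rewrite pd_add; auto. apply dl_add; auto.
    intro m. rewrite (pd_fun m _ (fun x => pd m f x + pd m g x)). apply Tadd; auto.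
    intro x. apply dl_add; auto.
  - split; [apply cont3_mul; auto|].
    split. intros m x. rewrite pd_mul; auto. apply dl_mul; auto.
    intro m. rewrite (pd_fun m _ (fun x => pd m f x * g x + f x * pd m g x)).
    apply Tadd; apply Tmul; auto.
    intro x. apply dl_mul; auto.
  - split. apply (cont3_comp exp); auto. intro x. apply (cont_lim _ _ _ (derivable_pt_lim_exp _)).
    split. intros m x. rewrite pd_exp; auto. apply dl_exp; auto.
    intro m. rewrite (pd_fun m _ (fun x => exp (f x) * pd m f x)).
    apply Tmul; auto. apply Texp; auto.
    intro x. apply dl_exp; auto.
  - split. apply (cont3_comp ln); auto. intro x. apply (cont_lim _ _ _ (derivable_pt_lim_ln _ (Hpos x))).
    split. intros m x. rewrite pd_ln; auto. apply dl_ln; auto.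
    intro m. rewrite (pd_fun m _ (fun x => exp ((-1) * ln (f x)) * pd m f x)).
    apply Tmul; auto. apply Texp. apply Tmul. apply Tconst. apply Tln; auto.
    intro x. replace (exp ((-1) * ln (f x))) with (/ f x). apply dl_ln; auto.
    replace ((-1) * ln (f x)) with (- ln (f x)) by ring. rewrite exp_Ropp, exp_ln; auto.
Qed.

Lemma T_pdiff f : T f -> pdiff f.
Proof. intro H; apply (T_closed f H). Qed.

Lemma T_smooth f : T f -> smooth f.
Proof.
  intros Hf l.
  assert (Hl : T (iter_pd l f)).
  { induction l; simpl; auto. apply (T_closed _ IHl). }
  destruct (T_closed _ Hl) as [C [P _]]. split; auto.
Qed.

Lemma vf_const V c x : vf_app V (fun _ => c) x = 0.
Proof. unfold vf_app, sum3. rewrite !pd_const. ring. Qed.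

Lemma vf_add V f g x : pdiff f -> pdiff g ->
  vf_app V (fun y => f y + g y) x = vf_app V f x + vf_app V g x.
Proof. intros. unfold vf_app, sum3. rewrite !pd_add by auto. ring. Qed.

Lemma vf_mul V f g x : pdiff f -> pdiff g ->
  vf_app V (fun y => f y * g y) x = vf_app V f x * g x + f x * vf_app V g x.
Proof. intros. unfold vf_app, sum3. rewrite !pd_mul by auto. ring. Qed.

Lemma vf_exp V f x : pdiff f ->
  vf_app V (fun y => exp (f y)) x = exp (f x) * vf_app V f x.
Proof. intros. unfold vf_app, sum3. rewrite !pd_exp by auto. ring. Qed.

Lemma vf_ln V f x : pdiff f -> (forall y, 0 < f y) ->
  vf_app V (fun y => ln (f y)) x = vf_app V f x / f x.
Proof. intros Hf Hp. unfold vf_app, sum3. rewrite !pd_ln by auto.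
  assert (f x <> 0) by (apply Rgt_not_eq; apply Hp). field; auto. Qed.

Lemma vf_scale f V h x : vf_app (scale f V) h x = f x * vf_app V h x.
Proof. unfold vf_app, scale, sum3. ring. Qed.

Lemma bracket_scale fa fb (Va Vb : VF) m x :
  pdiff fa -> pdiff fb -> (forall n, pdiff (Va n)) -> (forall n, pdiff (Vb n)) ->
  bracket (scale fa Va) (scale fb Vb) m x =
  fa x * fb x * bracket Va Vb m x + fa x * vf_app Va fb x * Vb m x
  - fb x * vf_app Vb fa x * Va m x.
Proof.
  intros. unfold bracket. rewrite !vf_scale. unfold scale.
  rewrite !vf_mul by auto. ring.
Qed.

Definition cs (D : idx -> VF) (F : idx -> point -> R) (c : idx -> idx -> idx -> point -> R)
  (a b i : idx) (x : point) : R :=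
  F a x * F b x * c a b i x / F i x
  + (if idx_eqb i b then F a x * vf_app (D a) (F b) x / F b x else 0)
  - (if idx_eqb i a then F b x * vf_app (D b) (F a) x / F a x else 0).

Lemma structure_scale D F c :
  is_structure D c -> (forall i x, F i x <> 0) -> (forall i, pdiff (F i)) ->
  (forall i m, pdiff (D i m)) ->
  is_structure (fun i => scale (F i) (D i)) (cs D F c).
Proof.
  intros Hc Hnz HF HD a b m x.
  rewrite bracket_scale by auto. rewrite Hc.
  unfold cs, sum3, scale.
  pose proof (Hnz I1 x). pose proof (Hnz I2 x). pose proof (Hnz I3 x).
  destruct a, b; cbn [idx_eqb]; field; auto.
Qed.

Lemma det3_scale (f : idx -> R) M :
  det3 (fun i m => f i * M i m) = f I1 * f I2 * f I3 * det3 M.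
Proof. unfold det3. ring. Qed.

Lemma frame_scale D F :
  is_frame D -> (forall i x, F i x <> 0) -> (forall i m, smooth (fun x => F i x * D i m x)) ->
  is_frame (fun i => scale (F i) (D i)).
Proof.
  intros [Hs Hd] Hnz Hsm. split.
  - intros i m. apply Hsm.
  - intro x. unfold scale.
    change (det3 (fun i m => (fun i => F i x) i * (fun i m => D i m x) i m) <> 0).
    rewrite det3_scale.
    pose proof (Hnz I1 x). pose proof (Hnz I2 x). pose proof (Hnz I3 x). pose proof (Hd x).
    repeat apply Rmult_integral_contrapositive_currified; auto.
Qed.

Definition Fsc (sigma : R) (A B : point -> R) (g : idx -> point -> R) (i : idx) (x : point) : R :=
  sigma * A x * Bpow B (fun y => g (nxt i) y + g (nxt (nxt i)) y) x.

Ltac Tsolve :=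
  repeat (first [ apply Tconst | apply Tadd | apply Tmul | apply Texp
                | (apply Tln; [ | intro; auto ]) | (apply Tsm; auto) ]).

Ltac sidec := first [ apply T_pdiff; Tsolve | intro; auto ].

Ltac expand :=
  repeat (first [ rewrite vf_mul by sidec | rewrite vf_add by sidec
                | rewrite vf_exp by sidec | rewrite vf_ln by sidec | rewrite vf_const ]).

Lemma exp_nz y : exp y <> 0.
Proof. apply Rgt_not_eq, exp_pos. Qed.

Ltac nzs := repeat (first [ apply conj | apply Rmult_integral_contrapositive_currified
              | apply exp_nz | assumption | apply Rgt_not_eq; assumption ]).

Ltac fin sigma A B g D i j k HE2 HdE1 HE1x x :=
  rewrite vf_add in HE2 by sidec;
  repeat (first [rewrite vf_mul in HdE1 by sidec | rewrite vf_add in HdE1 by sidec]);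
  match type of HE2 with 0 = ?e2 => match type of HdE1 with ?de = 0 =>
  match type of HE1x with 0 = ?e1 =>
  transitivity (sigma * A x * exp ((g j x + g k x) * ln (B x)) * A x *
       (e2 - ln (B x) * de - 2 * (vf_app (D i) B x / B x) * e1));
  [ rewrite <- HE2, HdE1, <- HE1x; ring | field; nzs ] end end end.

Theorem lemma6p8 (g : idx -> point -> R) (D : idx -> VF) (xi : point -> R)
  (H : MC_pre g D xi) (A B : point -> R)
  (HA : smooth A) (HB : smooth B)
  (HApos : forall x, 0 < A x) (HBpos : forall x, 0 < B x)
  (sigma : R) (Hsigma : sigma = 1 \/ sigma = -1) :
  MC_pre (fun i x => A x * g i x)
    (fun i => scale (fun x => sigma * A x *
                 Bpow B (fun y => g (nxt i) y + g (nxt (nxt i)) y) x) (D i))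
    (fun x => xi x + ln (A x) + (g I1 x + g I2 x + g I3 x) * ln (B x)).
Proof.
  change (MC_pre (fun i x => A x * g i x) (fun i => scale (Fsc sigma A B g i) (D i))
    (fun x => xi x + ln (A x) + (g I1 x + g I2 x + g I3 x) * ln (B x))).
  destruct H as [Hg [Hxi [[HDs HDdet] [HE1 [c [Hc HE2]]]]]].
  assert (HDs' : forall i m, smooth (D i m)) by (intros; apply HDs).
  assert (Hs0 : sigma <> 0) by (destruct Hsigma; subst; lra).
  assert (HF : forall i x, Fsc sigma A B g i x <> 0).
  { intros i x. unfold Fsc, Bpow. pose proof (HApos x).
    pose proof (exp_pos ((g (nxt i) x + g (nxt (nxt i)) x) * ln (B x))).
    repeat apply Rmult_integral_contrapositive_currified; lra. }
  assert (HFT : forall i, T (Fsc sigma A B g i)).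
  { intro i. unfold Fsc, Bpow. Tsolve. }
  split; [|split; [|split; [|split]]].
  - intro i. apply T_smooth. Tsolve.
  - apply T_smooth. Tsolve.
  - apply frame_scale; auto. split; auto.
    intros i m. apply T_smooth. apply Tmul; auto. apply Tsm; auto.
  - intro x. pose proof (HE1 x). 
    replace (A x * g I2 x * (A x * g I3 x) + A x * g I3 x * (A x * g I1 x) + A x * g I1 x * (A x * g I2 x))
      with (A x * A x * (g I2 x * g I3 x + g I3 x * g I1 x + g I1 x * g I2 x)) by ring.
    rewrite <- H. ring.
  - exists (cs D (Fsc sigma A B g) c). split.
    + apply structure_scale; auto. intro; apply T_pdiff; auto.
      intros; apply T_pdiff; apply Tsm; auto.
    + assert (HdE1 : forall i x, vf_app (D i) (fun y => g I2 y * g I3 y + g I3 y * g I1 y + g I1 y * g I2 y) x = 0).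
      { intros i x. replace (fun y => g I2 y * g I3 y + g I3 y * g I1 y + g I1 y * g I2 y) with (fun _ : point => 0).
        apply vf_const. apply functional_extensionality; intro y; apply HE1. }
      intros i x. cbv zeta.
      specialize (HE2 i x). specialize (HdE1 i x). pose proof (HE1 x) as HE1x. cbv zeta in HE2.
      rewrite !vf_scale. unfold cs.
      destruct i; cbn [nxt idx_eqb] in *; unfold Fsc, Bpow; cbn [nxt]; cbv beta; expand.
      all: pose proof (HApos x) as Ax; pose proof (HBpos x) as Bx.
      all: assert (Ax' : A x <> 0) by lra; assert (Bx' : B x <> 0) by lra.
      * fin sigma A B g D I1 I2 I3 HE2 HdE1 HE1x x.
      * fin sigma A B g D I2 I3 I1 HE2 HdE1 HE1x x.
      * fin sigma A B g D I3 I1 I2 HE2 HdE1 HE1x x.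
Qed.
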